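(* Let $\eta>0$, $n\ge 1$, $b\in\{1,\dots,n\}$, and let $x_i=(a_i,y_i)$, $i=1,\dots,n$, with $a_i\in\mathbb{R}^d$, $y_i\in\mathbb{R}$. Let $(\Omega_k)_{k\ge1}$ be i.i.d. uniformly random subsets of $\{1,\dots,n\}$ of cardinality $b$, and set $H_k:=\sum_{i\in\Omega_k}a_ia_i^{\top}$, $q_k:=\sum_{i\in\Omega_k}a_iy_i$. Consider the Markov chain $\theta_k=\left(I-\frac{\eta}{b}H_k\right)\theta_{k-1}+\frac{\eta}{b}q_k$ on $\mathbb{R}^d$ with transition kernel $P$. Assume $\rho:=\mathbb{E}\left\Vert I-\frac{\eta}{b}H_1\right\Vert<1$. Then for every $k\in\mathbb{N}$ and all $\theta,\tilde\theta\in\mathbb{R}^d$, $$\mathcal{W}_1\big(P^k(\theta,\cdot),P^k(\tilde\theta,\cdot)\big)\le\rho^k\Vert\theta-\tilde\theta\Vert.$$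
   Context: This is SGD with batch size $b$ and step size $\eta$ for the quadratic loss $f(\theta,x_i)=(a_i^\top\theta-y_i)^2/2$. $\Vert\cdot\Vert$ on matrices is the operator norm. $P^k(\theta,\cdot)$ is the law of $\theta_k$ when $\theta_0=\theta$. $\mathcal{W}_1$ is the 1-Wasserstein distance: $\mathcal{W}_1(\mu,\nu)=\inf\mathbb{E}\Vert X-Y\Vert$ over couplings of $X\sim\mu$, $Y\sim\nu$. *)

(* Defs.v *)
From HB Require Import structures.
From mathcomp Require Import all_boot all_order all_algebra.
From mathcomp Require Import classical_sets reals.

Set Implicit Arguments.
Unset Strict Implicit.
Unset Printing Implicit Defensive.

Import Order.TTheory GRing.Theory Num.Theory.
Local Open Scope ring_scope.
Local Open Scope classical_set_scope.

Section SGD.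
Variables (R : realType) (d n : nat).

Definition vnorm (v : 'cV[R]_d) : R := Num.sqrt (\sum_(i < d) v i 0 ^+ 2).

Definition opnorm (M : 'M[R]_d) : R :=
  sup [set r | exists v : 'cV[R]_d, vnorm v <= 1 /\ r = vnorm (M *m v)].

Variables (a : 'I_n -> 'cV[R]_d) (y : 'I_n -> R) (eta : R) (b : nat).

Definition Hmat (Om : {set 'I_n}) : 'M[R]_d := \sum_(i in Om) (a i *m (a i)^T).
Definition qvec (Om : {set 'I_n}) : 'cV[R]_d := \sum_(i in Om) (y i *: a i).

Definition sgd_step (th : 'cV[R]_d) (Om : {set 'I_n}) : 'cV[R]_d :=
  (1%:M - (eta / b%:R) *: Hmat Om) *m th + (eta / b%:R) *: qvec Om.

Definition admissible (Om : {set 'I_n}) : bool := #|Om| == b.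

Definition nbatch : R := #|[set Om : {set 'I_n} | admissible Om]|%:R.

Definition theta_k (k : nat) (th : 'cV[R]_d) (w : k.-tuple {set 'I_n}) :=
  foldl sgd_step th w.

(* probability mass function of P^k(th, .): the law of theta_k when
   theta_0 = th and Omega_1..Omega_k are i.i.d. uniform among admissible sets *)
Definition Pk (k : nat) (th : 'cV[R]_d) (x : 'cV[R]_d) : R :=
  \sum_(w : k.-tuple {set 'I_n} | all admissible w)
     (if theta_k th w == x then (nbatch ^+ k)^-1 else 0).

Definition rho : R :=
  \sum_(Om : {set 'I_n} | admissible Om)
     opnorm (1%:M - (eta / b%:R) *: Hmat Om) / nbatch.

End SGD.

(* Finitely supported (discrete) measures: a coupling of two finitely
   supported probability laws mu, nu on R^d is necessarily supported on the
   finite product of their supports, hence is a finite list of weighted atoms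
   (w, (u, v)) with w >= 0 whose marginals are mu and nu. *)
Definition is_coupling (R : realType) (d : nat)
  (mu nu : 'cV[R]_d -> R) (pi : seq (R * ('cV[R]_d * 'cV[R]_d))) : Prop :=
  (forall p, p \in pi -> 0 <= p.1) /\
  (forall x, \sum_(p <- pi | p.2.1 == x) p.1 = mu x) /\
  (forall x, \sum_(p <- pi | p.2.2 == x) p.1 = nu x).

Definition W1 (R : realType) (d : nat) (mu nu : 'cV[R]_d -> R) : R :=
  inf [set c | exists pi, is_coupling mu nu pi /\
               c = \sum_(p <- pi) p.1 * vnorm (p.2.1 - p.2.2)].

(* Main.v *)
Require Import Defs.
From HB Require Import structures.
From mathcomp Require Import all_boot all_order all_algebra.
From mathcomp Require Import classical_sets reals.
From mathcomp Require Import lra.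
Import Order.TTheory GRing.Theory Num.Theory.
Local Open Scope classical_set_scope.
Local Open Scope ring_scope.

Section Aux.
Variables (R : realType) (d : nat).

Lemma vnorm_ge0 (v : 'cV[R]_d) : 0 <= vnorm v.
Proof. exact: sqrtr_ge0. Qed.

Lemma coord_le (v : 'cV[R]_d) j : `|v j 0| <= vnorm v.
Proof.
rewrite /vnorm -sqrtr_sqr; apply: ler_wsqrtr.
rewrite (bigD1 j) //= lerDl; apply: sumr_ge0 => i _; exact: sqr_ge0.
Qed.

Lemma vnorm0 (v : 'cV[R]_d) : vnorm v = 0 -> v = 0.
Proof.
move/eqP; rewrite /vnorm sqrtr_eq0 => H.
have H0 : \sum_(i < d) v i 0 ^+ 2 = 0.
  by apply/le_anti; rewrite H sumr_ge0 // => i _; exact: sqr_ge0.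
apply/matrixP => i j; rewrite (ord1 j) mxE.
have := psumr_eq0P (P := predT) (fun i _ => sqr_ge0 (v i 0)) H0 (i:=i) isT.
by move/eqP; rewrite sqrf_eq0 => /eqP.
Qed.

Lemma vnormZ c (v : 'cV[R]_d) : vnorm (c *: v) = `|c| * vnorm v.
Proof.
rewrite /vnorm -sqrtr_sqr -sqrtrM ?sqr_ge0 // mulr_sumr; congr Num.sqrt.
by apply: eq_bigr => i _; rewrite mxE exprMn.
Qed.

Definition opset (M : 'M[R]_d) :=
  [set r | exists v : 'cV[R]_d, vnorm v <= 1 /\ r = vnorm (M *m v)].

Lemma opset_ub (M : 'M[R]_d) : has_ubound (opset M).
Proof.
exists (Num.sqrt (\sum_(i < d) (\sum_(j < d) `|M i j|) ^+ 2)).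
move=> r [v [Hv ->]]; rewrite /vnorm; apply: ler_wsqrtr; apply: ler_sum => i _.
rewrite -[X in X <= _]real_normK ?num_real //.
apply: lerXn2r; rewrite ?nnegrE ?normr_ge0 ?sumr_ge0 //.
rewrite mxE; apply: le_trans (ler_norm_sum _ _ _) _; apply: ler_sum => j _.
  rewrite normrM; apply: ler_piMr; first exact: normr_ge0.
  exact: le_trans (coord_le v j) Hv.
Qed.

Lemma opnorm_ge0 (M : 'M[R]_d) : 0 <= opnorm M.
Proof.
apply: (ub_le_sup (opset_ub M)); exists 0; split.
  by rewrite /vnorm big1 ?sqrtr0 // => i _; rewrite mxE expr0n.
by rewrite mulmx0 /vnorm big1 ?sqrtr0 // => i _; rewrite mxE expr0n.
Qed.

Lemma opnorm_le (M : 'M[R]_d) v : vnorm (M *m v) <= opnorm M * vnorm v.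
Proof.
have [H0|Hp] := eqVneq (vnorm v) 0.
  by rewrite H0 mulr0 (@vnorm0 v H0) mulmx0 /vnorm big1 ?sqrtr0 // => i _; rewrite mxE expr0n.
have Hpos : 0 < vnorm v by rewrite lt_def Hp vnorm_ge0.
have := ub_le_sup (opset_ub M) (x := vnorm (M *m ((vnorm v)^-1 *: v))).
rewrite -scalemxAr !vnormZ ger0_norm ?invr_ge0 ?vnorm_ge0 // => H.
rewrite -ler_pdivrMr // mulrC; apply: H; exists ((vnorm v)^-1 *: v); split => //.
rewrite vnormZ ger0_norm ?invr_ge0 ?vnorm_ge0 // mulVf //.
by rewrite -scalemxAr vnormZ ger0_norm // invr_ge0 vnorm_ge0.
Qed.
End Aux.
Lemma sum_tuple_cons (R : realType) (T : finType) k (F : k.+1.-tuple T -> R) :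
  \sum_(w : k.+1.-tuple T) F w =
  \sum_(x : T) \sum_(w : k.-tuple T) F [tuple of x :: w].
Proof.
rewrite pair_big /=.
rewrite (reindex (fun p : T * k.-tuple T => [tuple of p.1 :: p.2])) //=.
exists (fun t : k.+1.-tuple T => (thead t, [tuple of behead t])).
  by move=> [x w] _ /=; congr pair; apply: val_inj.
move=> t _; apply: val_inj => /=.
by case: t => [[|z s] //=] _; rewrite /thead (tnth_nth z) /=.
Qed.

Section Main.
Variables (R : realType) (d n : nat) (a : 'I_n -> 'cV[R]_d)
  (y : 'I_n -> R) (eta : R) (b : nat).

Let M Om := (1%:M - (eta / b%:R) *: Hmat a Om) : 'M[R]_d.
Let c := (nbatch R n b)^-1.

Lemma step_diff th th' Om :
  sgd_step a y eta b th Om - sgd_step a y eta b th' Om = M Om *m (th - th').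
Proof.
rewrite /sgd_step mulmxBr /M; set q := (_ *: qvec _ _ _).
by rewrite opprD addrACA subrr addr0.
Qed.

Lemma c_ge0 : 0 <= c.
Proof. by rewrite invr_ge0 ler0n. Qed.

Lemma rhoE : rho a eta b = \sum_(Om : {set 'I_n} | admissible b Om) c * opnorm (M Om).
Proof. by apply: eq_bigr => Om _; rewrite mulrC. Qed.

Lemma rho_ge0 : 0 <= rho a eta b.
Proof.
rewrite rhoE; apply: sumr_ge0 => Om _; apply: mulr_ge0; [exact: c_ge0|exact: opnorm_ge0].
Qed.

Lemma key k : forall th th',
  \sum_(w : k.-tuple {set 'I_n} | all (admissible b) w)
     c ^+ k * vnorm (theta_k a y eta b th w - theta_k a y eta b th' w)
  <= rho a eta b ^+ k * vnorm (th - th').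
Proof.
elim: k => [|k IH] th th'.
  rewrite (big_pred1 [tuple]) ?expr0 ?mul1r //.
  by move=> w; rewrite tuple0 /= eqxx.
rewrite big_mkcond sum_tuple_cons /=.
apply: (@le_trans _ _ (\sum_(Om : {set 'I_n} | admissible b Om)
     c * (rho a eta b ^+ k * vnorm (sgd_step a y eta b th Om - sgd_step a y eta b th' Om)))).
  rewrite [X in _ <= X]big_mkcond /=; apply: ler_sum => Om _.
  case: (admissible b Om) => /=; last by rewrite big1.
  apply: le_trans (ler_wpM2l c_ge0 (IH _ _)).
  rewrite mulr_sumr [X in _ <= X]big_mkcond /=; apply: ler_sum => w _.
  by case: (all (admissible b) w); rewrite ?mulr0 // exprS mulrA.
apply: (@le_trans _ _ (\sum_(Om : {set 'I_n} | admissible b Om)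
   c * opnorm (M Om) * (rho a eta b ^+ k * vnorm (th - th')))).
  apply: ler_sum => Om _; rewrite -mulrA; apply: ler_wpM2l; first exact: c_ge0.
  rewrite mulrCA; apply: ler_wpM2l; first by apply: exprn_ge0; exact: rho_ge0.
  rewrite step_diff; exact: opnorm_le.
by rewrite -mulr_suml -rhoE exprS mulrA.
Qed.
End Main.

Theorem lemma3p1 (R : realType) (d n : nat) (a : 'I_n -> 'cV[R]_d)
  (y : 'I_n -> R) (eta : R) (b : nat) :
  0 < eta -> (1 <= n)%N -> (1 <= b <= n)%N ->
  rho a eta b < 1 ->
  forall (k : nat) (th th' : 'cV[R]_d),
    W1 (Pk a y eta b k th) (Pk a y eta b k th')
    <= (rho a eta b) ^+ k * vnorm (th - th').
Proof.
move=> _ _ _ _ k th th'.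
set W := ((nbatch R n b) ^+ k)^-1.
set P := [pred w : k.-tuple {set 'I_n} | all (admissible b) w].
set pi := [seq (W, (theta_k a y eta b th w, theta_k a y eta b th' w)) | w <- enum P].
have Wge0 : 0 <= W by rewrite invr_ge0 exprn_ge0 ?ler0n.
have Hc : is_coupling (Pk a y eta b k th) (Pk a y eta b k th') pi.
  split; [|split].
  - by move=> p /mapP [w _ ->].
  - move=> x; rewrite big_map big_enum_cond /Pk -big_mkcondr.
    by apply: eq_bigl => w.
  - move=> x; rewrite big_map big_enum_cond /Pk -big_mkcondr.
    by apply: eq_bigl => w.
apply: (@le_trans _ _ (\sum_(p <- pi) p.1 * vnorm (p.2.1 - p.2.2))).
  apply: (ge_inf); last by exists pi; split.
  exists 0 => z [pi' [[Hpos _] ->]].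
  rewrite big_seq; apply: sumr_ge0 => p Hp; apply: mulr_ge0; [exact: Hpos|exact: vnorm_ge0].
rewrite big_map big_enum /=.
apply: le_trans (@key _ _ _ a y eta b k th th').
rewrite le_eqVlt; apply/orP; left; apply/eqP; apply: eq_big => // w.
by rewrite /W exprVn.
Qed.
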